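(* Let $G$ be a finite group and let $S$ be a set of non-identity arrows of $G$. Let $(K,H)$ be a non-identity arrow (so $K< H\leqslant G$). If $(K,H)\in\langle S\rangle$, then there exist an arrow $(K',H')\in S$ and an element $g\in G$ such that $K\leqslant gK'g^{-1}$ and $H\leqslant gH'g^{-1}$.
   Context: For a finite group $G$, an arrow is a pair $(K,H)$ of subgroups with $K\leqslant H$; it is an identity arrow if $K=H$. A $G$-transfer system is a set $\mathsf{T}$ of arrows containing all identity arrows and closed under composition ($(A,B),(B,C)\in\mathsf{T}\Rightarrow(A,C)\in\mathsf{T}$), conjugation ($(A,B)\in\mathsf{T}\Rightarrow(gAg^{-1},gBg^{-1})\in\mathsf{T}$ for all $g\in G$) and restriction ($(A,B)\in\mathsf{T}$, $L\leqslant B\Rightarrow(A\cap L,L)\in\mathsf{T}$). For a set $S$ of arrows, $\langle S\rangle$ denotes the smallest $G$-transfer system containing $S$. *)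

(* Defs.v *)
From mathcomp Require Import all_boot all_fingroup.
Set Implicit Arguments. Unset Strict Implicit. Unset Printing Implicit Defensive.
Local Open Scope group_scope.

(* An arrow of G (here G = [set: gT], the whole finite group) is a pair (K, H)
   of subgroups with K \subset H. *)
Definition arrow (gT : finGroupType) := ({group gT} * {group gT})%type.

Definition is_arrow (gT : finGroupType) (a : arrow gT) : Prop := a.1 \subset a.2.

Definition arrow_set (gT : finGroupType) := arrow gT -> Prop.

Definition is_transfer_system (gT : finGroupType) (T : arrow_set gT) : Prop :=
  (forall a, T a -> is_arrow a) /\
  (forall H : {group gT}, T (H, H)) /\
  (forall A B C : {group gT}, T (A, B) -> T (B, C) -> T (A, C)) /\
  (forall (A B : {group gT}) (g : gT), T (A, B) -> T ((A :^ g)%G, (B :^ g)%G)) /\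
  (forall A B L : {group gT}, T (A, B) -> L \subset B -> T ((A :&: L)%G, L)).

Definition gen_transfer (gT : finGroupType) (S : arrow_set gT) : arrow_set gT :=
  fun a => forall T : arrow_set gT, is_transfer_system T ->
             (forall b, S b -> T b) -> T a.

(* Main.v *)
Require Import Defs.
From mathcomp Require Import all_boot all_fingroup.
Local Open Scope group_scope.

Definition Tw (gT : finGroupType) (S : arrow_set gT) : arrow_set gT :=
  fun a => is_arrow a /\ ((a.1 : {set gT}) = a.2 \/
    exists K' H' : {group gT}, exists g : gT,
    S (K', H') /\ a.1 \subset K' :^ g^-1 /\ a.2 \subset H' :^ g^-1).

Lemma Tw_ts (gT : finGroupType) (S : arrow_set gT) : is_transfer_system (@Tw gT S).
Proof.
split; first by move=> a [].
split; first by move=> H; split; [exact: subxx | left].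
split.
  move=> A B C [/= sAB hAB] [/= sBC hBC]; split; first exact: subset_trans sAB sBC.
  case: hBC => [eBC|[K' [H' [g [HS [s1 s2]]]]]].
    by rewrite /= -eBC; case: hAB => [->|]; [left|right].
  right; exists K', H', g; split=> //; split=> //=; exact: subset_trans sAB s1.
split.
  move=> A B h [/= sAB hAB]; split; first by rewrite /is_arrow /= conjSg.
  case: hAB => [eAB|[K' [H' [g [HS [s1 s2]]]]]]; first by left; rewrite /= eAB.
  right; exists K', H', (h^-1 * g); split=> //=.
  have -> : (h^-1 * g)^-1 = g^-1 * h by rewrite invMg invgK.
  by rewrite !conjsgM !conjSg.
move=> A B L [/= sAB hAB] sLB; split; first by rewrite /is_arrow /= subsetIr.
case: hAB => [eAB|[K' [H' [g [HS [s1 s2]]]]]].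
  by left; rewrite /= eAB; apply/setIidPr.
right; exists K', H', g; split=> //=; split.
  exact: subset_trans (subsetIl _ _) s1.
exact: subset_trans sLB s2.
Qed.

Theorem lemma2p9 (gT : finGroupType) (S : arrow_set gT)
  (HS_arrows : forall a, S a -> is_arrow a)
  (HS_nonid : forall a, S a -> a.1 != a.2)
  (K H : {group gT}) (HKH : K \proper H) :
  gen_transfer S (K, H) ->
  exists K' H' : {group gT}, exists g : gT,
    S (K', H') /\ K \subset K' :^ g^-1 /\ H \subset H' :^ g^-1.
Proof.
move=> hg.
have hS : forall b, S b -> @Tw gT S b.
  case=> K' H' hb; split; first exact: HS_arrows hb.
  by right; exists K', H', 1; rewrite invg1 !conjsg1.
have [_ [/= eKH|//]] := hg _ (@Tw_ts gT S) hS.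
by move: HKH; rewrite eKH properxx.
Qed.
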